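(* Let $c\ge2$ and let $d$ be an integer with $1\le d\le c-1$. For every $c$-uniform unoriented hypergraph $\Gamma$ with $E\neq\varnothing$ (and no isolated vertices), with smallest normalized Laplacian eigenvalue $\lambda_1$ (which satisfies $\lambda_1<1$), the $d$-proper coloring number satisfies \[ \chi_d(\Gamma)\;\ge\;\frac{c-\lambda_1}{d-\lambda_1}. \] Moreover, the bound is sharp if and only if $d\mid c$: if equality holds for some such $\Gamma$ then $d\mid c$, and conversely if $d\mid c$ then there exists a $c$-uniform unoriented hypergraph for which equality holds.
   Context: A hypergraph has finite vertex set $V$, $|V|=N$, and edge set $E\subseteq\mathcal P(V)$; it is $c$-uniform if $|e|=c$ for all $e\in E$, and unoriented means all vertex–edge incidences have orientation $+1$. The degree $\deg v=|\{e\in E: v\in e\}|$ is assumed $\ge1$; $D=\mathrm{diag}(\deg v)$. The adjacency matrix has $A_{v,v}=0$ and $A_{v,w}=-|\{e\in E: v,w\in e\}|$ for $v\ne w$; the normalized Laplacian is $L=\mathrm{Id}-D^{-1}A$ with real eigenvalues $\lambda_1\le\dots\le\lambda_N$. For an integer $d\ge1$, a $k$-coloring $V\to\{1,\dots,k\}$ is $d$-proper if every edge contains at most $d$ vertices of each color; $\chi_d(\Gamma)$ is the least $k$ admitting a $d$-proper $k$-coloring. *)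

(* Defs.v *)
From mathcomp Require Import all_boot all_order all_algebra.
From mathcomp Require Export reals.
Set Implicit Arguments. Unset Strict Implicit. Unset Printing Implicit Defensive.
Import Order.TTheory GRing.Theory Num.Theory.
Local Open Scope ring_scope.

Section Hypergraph.
Variable V : finType.
(* A hypergraph on vertex set V is given by its edge set E : {set {set V}}.
   Unoriented: every incidence has orientation +1 (implicit). *)
Variable E : {set {set V}}.

Definition uniform (c : nat) : Prop := forall e, e \in E -> #|e| = c.

Definition hdeg (v : V) : nat := #|[set e in E | v \in e]|.

Definition hadj (R : ringType) : 'M[R]_#|V| :=
  \matrix_(i, j) (if i == j then 0
                  else - (#|[set e in E | (enum_val i \in e) && (enum_val j \in e)]|)%:R).

Definition hdegmx (R : ringType) : 'M[R]_#|V| :=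
  diag_mx (\row_i (hdeg (enum_val i))%:R).

Definition hlaplacian (R : fieldType) : 'M[R]_#|V| :=
  1%:M - invmx (hdegmx R) *m hadj R.

Definition smallest_eigenvalue (R : realFieldType) (lam : R) : Prop :=
  eigenvalue (hlaplacian R) lam /\
  (forall mu : R, eigenvalue (hlaplacian R) mu -> lam <= mu).

Definition d_proper (d k : nat) (f : {ffun V -> 'I_k}) : bool :=
  [forall e in E, forall i : 'I_k, #|[set v in e | f v == i]| <= d]%N.

Definition colorable (d k : nat) : bool :=
  [exists f : {ffun V -> 'I_k}, d_proper d f].

(* For d >= 1 the coloring
   by enum_rank shows k = #|V| works, so the least such k is <= #|V| and is
   found by the search below (for d = 0 the value is junk, unused). *)
Definition chi (d : nat) : nat := find (colorable d) (iota 0 #|V|.+1).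

End Hypergraph.

(* Main.v *)
Require Import Defs.
From mathcomp Require Import all_boot all_order all_algebra.
From mathcomp Require Import complex spectral sesquilinear.
From mathcomp Require Import lra.
Import Order.TTheory GRing.Theory Num.Theory.
Local Open Scope ring_scope.

Lemma complex_real_Re (R : rcfType) (z : R[i]) : z \is Num.real -> z = ((complex.Re z)%:C)%C.
Proof.
move=> /CrealP; case: z => a b /= [] Hb.
have -> : b = 0.
  have : b + b = 0 by rewrite -{1}Hb addNr.
  by rewrite -mulr2n => /eqP; rewrite mulrn_eq0 /= => /eqP.
by [].
Qed.

Local Notation f := (real_complex _).
Lemma quad_ge (R : rcfType) n (P : 'M[R]_n) (lam : R) :
  P^T = P -> (forall mu, eigenvalue P mu -> lam <= mu) ->
  forall x : 'rV[R]_n, lam * (x *m x^T) 0 0 <= (x *m P *m x^T) 0 0.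
Proof.
move=> Psym Hlam x.

have fconj : forall r : R, (f r)^* = f r by move=> r; exact: conjc_real.
pose Pc := map_mx f P.
have Pherm : Pc \is hermsymmx.
  apply/is_hermitianmxP; rewrite expr0 scale1r; apply/matrixP => i j; rewrite !mxE fconj.
  by have := congr1 (fun M : 'M[R]_n => M i j) Psym; rewrite mxE => ->.
set U := spectralmx Pc; set L := spectral_diag Pc.
have PE : Pc = invmx U *m diag_mx L *m U by apply/orthomx_spectralP; exact: hermitian_normalmx.
have Uu : U \is unitarymx := spectral_unitarymx Pc.
have Uunit : U \in unitmx := spectral_unit Pc.
have Lreal := hermitian_spectral_diag_real Pherm.
have Lge : forall j, f lam <= L 0 j.
  move=> j.
  have ev : row j U *m Pc = L 0 j *: row j U.
    rewrite PE -row_mul !mulmxA mulmxV // mul1mx; apply/rowP => k.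
    by rewrite mul_diag_mx !mxE.
  have nz : row j U != 0.
    apply/negP => /eqP h; have := Uu; move/row_unitarymxP/(_ j j).
    by rewrite h eqxx dotmxE mul0mx mxE => /eqP; rewrite eq_sym oner_eq0.
  have Lj : L 0 j = f (complex.Re (L 0 j)) by apply: complex_real_Re; exact: (mxOverP Lreal).
  have : eigenvalue Pc (L 0 j) by apply/eigenvalueP; exists (row j U).
  rewrite Lj eigenvalue_root_char -map_char_poly fmorph_root -eigenvalue_root_char => /Hlam.
  by rewrite /f lecR.
pose xc := map_mx f x.
have xcT : (xc ^t* = map_mx f x^T)%sesqui.
  by apply/matrixP => i j; rewrite !mxE fconj.
have mapE : forall M : 'M[R]_(1,1), f (M 0 0) = (map_mx f M) 0 0.
  by move=> M; rewrite mxE.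
have lhs : f ((x *m P *m x^T) 0 0) = (xc *m Pc *m xc ^t*)%sesqui 0 0.
  by rewrite mapE !map_mxM xcT.
have rhs : f ((x *m x^T) 0 0) = (xc *m xc ^t*)%sesqui 0 0.
  by rewrite mapE !map_mxM xcT.
pose w := (xc *m U ^t*)%sesqui.
have UtU : ((U ^t*) *m U = 1%:M)%sesqui by rewrite -invmx_unitary // mulVmx.
have e1 : (xc *m xc ^t* = w *m w ^t*)%sesqui.
  rewrite /w trmx_mul map_mxM trmxCK mulmxA -(mulmxA xc) UtU mulmx1 //.
have e2 : (xc *m Pc *m xc ^t* = w *m diag_mx L *m w ^t*)%sesqui.
  rewrite PE invmx_unitary // /w trmx_mul map_mxM trmxCK !mulmxA //.
rewrite -lecR -/f rmorphM /= lhs rhs e1 e2 !mxE mulr_sumr.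
apply: ler_sum => j _.
have -> : (w ^t*)%sesqui j 0 = (w 0 j)^* by rewrite !mxE.
rewrite mul_mx_diag mxE [X in _ <= X]mulrAC [X in X <= _]mulrC.
apply: ler_wpM2l; [exact: mul_conjC_ge0 | exact: Lge].
Qed.

Lemma sum_enum (R : nmodType) (V : finType) (F : V -> R) :
  \sum_(i < #|V|) F (enum_val i) = \sum_v F v.
Proof.
rewrite (reindex (@enum_rank V)) /=; last first.
  by exists enum_val => x _; rewrite ?enum_rankK ?enum_valK.
by apply: eq_bigr => v _; rewrite enum_rankK.
Qed.
Arguments sum_enum {R V} F.

Section Ray.
Variables (R : realType) (V : finType) (E : {set {set V}}).
Hypothesis degpos : forall v, (0 < hdeg E v)%N.

Definition Smx : 'M[R]_#|V| :=
  \matrix_(i, j) (#|[set e in E | (enum_val i \in e) && (enum_val j \in e)]|)%:R.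

Lemma DmA : hdegmx E R - hadj E R = Smx.
Proof.
apply/matrixP => i j; rewrite !mxE; case: eqP => [<-|_].
  rewrite subr0 /hdeg; congr (_%:R); apply: eq_card => e; rewrite !inE andbb //.
by rewrite mulr0n sub0r opprK.
Qed.

Let dg (i : 'I_#|V|) : R := (hdeg E (enum_val i))%:R.
Let dg_gt0 i : 0 < dg i.
Proof. by rewrite /dg ltr0n degpos. Qed.
Let Dq : 'M[R]_#|V| := diag_mx (\row_i Num.sqrt (dg i)).
Let Dh : 'M[R]_#|V| := diag_mx (\row_i (Num.sqrt (dg i))^-1).

Let DqDh : Dq *m Dh = 1%:M.
Proof.
rewrite mulmx_diag; apply/matrixP => i j; rewrite !mxE.
  by case: eqP => [->|_]; rewrite ?mulr0n ?mulr1n //; rewrite mulfV // sqrtr_eq0 -ltNge dg_gt0.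
Qed.
Let DhDq : Dh *m Dq = 1%:M.
Proof. exact: mulmx1C DqDh. Qed.
Let DqDq : Dq *m Dq = hdegmx E R.
Proof.
rewrite /hdegmx mulmx_diag; apply/matrixP => i j; rewrite !mxE.
  by case: eqP => [->|_]; rewrite ?mulr0n ?mulr1n //; rewrite -expr2 sqr_sqrtr // ltW.
Qed.

Lemma Lform : hlaplacian E R = (Dh *m Dh) *m Smx.
Proof.
have H1 : hdegmx E R *m (Dh *m Dh) = 1%:M.
  by rewrite -DqDq mulmxA -(mulmxA Dq) DqDh mulmx1 DqDh.
have [Du _] := mulmx1_unit H1.
have inv : invmx (hdegmx E R) = Dh *m Dh.
  by rewrite -[invmx _]mulmx1 -H1 mulmxA mulVmx // mul1mx.
rewrite /hlaplacian -DmA mulmxBr -inv mulVmx // opprB addrC subrK.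
Qed.

Lemma Smx_sym : Smx^T = Smx.
Proof.
apply/matrixP => i j; rewrite !mxE; congr (_%:R); apply: eq_card => e.
by rewrite !inE [(_ \in e) && _]andbC.
Qed.

Let P := Dh *m Smx *m Dh.

Let P_sym : P^T = P.
Proof. by rewrite /P !trmx_mul tr_diag_mx Smx_sym mulmxA. Qed.

Let eig_transfer mu : eigenvalue P mu -> eigenvalue (hlaplacian E R) mu.
Proof.
move/eigenvalueP => [y yP ynz]; apply/eigenvalueP; exists (y *m Dq).
  rewrite Lform.
  have := congr1 (mulmx^~ Dq) yP; rewrite /= -scalemxAl => <-.
  by rewrite /P !mulmxA -(mulmxA y) DqDh mulmx1 -!mulmxA DhDq mulmx1.
apply: contra ynz => /eqP h.
by rewrite -[y]mulmx1 -DqDh mulmxA h mul0mx.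
Qed.

Lemma quad_form (M : 'M[R]_#|V|) (z : 'rV[R]_#|V|) :
  (z *m M *m z^T) 0 0 = \sum_j \sum_i z 0 i * M i j * z 0 j.
Proof.
rewrite !mxE; apply: eq_bigr => j _; rewrite !mxE mulr_suml.
by [].
Qed.

Lemma sum_edges_vert (F : {set V} -> V -> R) :
  \sum_(e in E) \sum_(v in e) F e v = \sum_v \sum_(e in E | v \in e) F e v.
Proof. by rewrite (exchange_big_dep predT). Qed.

Lemma card_sum (A : {set {set V}}) (Q : pred {set V}) :
  (#|[set e in A | Q e]|)%:R = \sum_(e in A) (Q e)%:R :> R.
Proof.
rewrite -sum1_card natr_sum big_mkcond [RHS]big_mkcond /=.
by apply: eq_bigr => e _; rewrite inE; case: (e \in A); case: (Q e).
Qed.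

Lemma rayleigh (lam : R) : smallest_eigenvalue E lam ->
  forall g : V -> R,
  lam * \sum_(e in E) \sum_(v in e) g v ^+ 2 <= \sum_(e in E) (\sum_(v in e) g v) ^+ 2.
Proof.
move=> [_ Hmin] g.
pose z : 'rV[R]_#|V| := \row_i g (enum_val i).
have := @quad_ge R _ P lam P_sym (fun mu H => Hmin mu (eig_transfer mu H)) (z *m Dq).
have -> : z *m Dq *m (z *m Dq)^T = z *m hdegmx E R *m z^T.
  by rewrite trmx_mul tr_diag_mx -DqDq !mulmxA.
have -> : z *m Dq *m P *m (z *m Dq)^T = z *m Smx *m z^T.
  rewrite trmx_mul tr_diag_mx /P !mulmxA -(mulmxA z) DqDh mulmx1.
  by rewrite -(mulmxA _ Dh) DhDq mulmx1.
have -> : (z *m hdegmx E R *m z^T) 0 0 = \sum_(e in E) \sum_(v in e) g v ^+ 2.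
  rewrite /hdegmx mul_mx_diag !mxE.
  under eq_bigr do rewrite !mxE.
  rewrite (sum_enum (fun v => g v * (hdeg E v)%:R * g v)) sum_edges_vert.
  apply: eq_bigr => v _.
  rewrite (eq_bigl (fun e => e \in [set e in E | v \in e])) => [|e]; last by rewrite !inE.
  by rewrite sumr_const /hdeg mulrAC -expr2 mulr_natr.
have -> : (z *m Smx *m z^T) 0 0 = \sum_(e in E) (\sum_(v in e) g v) ^+ 2.
  rewrite quad_form.
  transitivity (\sum_w \sum_v \sum_(e in E) ((v \in e) && (w \in e))%:R * (g v * g w)).
    rewrite -(sum_enum (fun w => \sum_v \sum_(e in E) ((v \in e) && (w \in e))%:R * (g v * g w))).
    apply: eq_bigr => j _.
    rewrite -(sum_enum (fun v => \sum_(e in E) ((v \in e) && (enum_val j \in e))%:R * (g v * g (enum_val j)))).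
    apply: eq_bigr => i _; rewrite !mxE card_sum mulr_sumr mulr_suml; apply: eq_bigr => e _.
    by rewrite mulrAC mulrC.
  rewrite exchange_big /=; under eq_bigr do rewrite exchange_big /=.
  rewrite exchange_big /=.
  apply: eq_bigr => e eE; rewrite expr2 mulr_suml [RHS]big_mkcond /=.
  apply: eq_bigr => v _.
  case: (v \in e) => /=; last by rewrite big1 // => w _; rewrite mul0r.
  rewrite mulr_sumr [RHS]big_mkcond /=; apply: eq_bigr => w _.
  by case: (w \in e); rewrite /= ?mul1r ?mul0r ?mulr0.
by [].
Qed.
End Ray.

Section Comb.
Variable R : realType.

Lemma sum_ind k (x : 'I_k) (F : 'I_k -> R) : \sum_a (x == a)%:R * F a = F x.
Proof.
rewrite (bigD1 x) //= eqxx mul1r big1 ?addr0 // => a /negbTE.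
by rewrite eq_sym => ->; rewrite mul0r.
Qed.

Lemma sum_ind1 k (x : 'I_k) : \sum_a (x == a)%:R = 1 :> R.
Proof.
rewrite -[RHS](sum_ind _ x (fun=> 1)); apply: eq_bigr => a _; by rewrite mulr1.
Qed.

Lemma pointwise k (x y : 'I_k) :
  \sum_a (k%:R * (x == a)%:R - 1) * (k%:R * (y == a)%:R - 1)
    = k%:R ^+ 2 * (y == x)%:R - k%:R :> R.
Proof.
under eq_bigr do rewrite mulrBl mul1r -mulrA.
rewrite sumrB -mulr_sumr sum_ind sumrB -mulr_sumr sum_ind1 sumr_const card_ord.
by rewrite mulr1 subrr subr0 mulrBr mulrA -expr2 mulr1.
Qed.

Lemma card_sumT (T : finType) (A : {set T}) (Q : pred T) :
  (#|[set x in A | Q x]|)%:R = \sum_(x in A) (Q x)%:R :> R.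
Proof.
rewrite -sum1_card natr_sum big_mkcond [RHS]big_mkcond /=.
by apply: eq_bigr => e _; rewrite inE; case: (e \in A); case: (Q e).
Qed.

End Comb.

Section Main.
Variables (R : realType) (V : finType) (E : {set {set V}}).

Definition Tcnt {k} (f : {ffun V -> 'I_k}) (e : {set V}) :=
  (\sum_(v in e) #|[set w in e | f w == f v]|)%N.

Lemma main_ineq (lam : R) c k (f : {ffun V -> 'I_k}) :
  (forall v, 0 < hdeg E v)%N -> smallest_eigenvalue E lam -> uniform E c ->
  lam * (#|E|%:R * c%:R * (k%:R ^+ 2 - k%:R)) <=
  k%:R ^+ 2 * (\sum_(e in E) Tcnt f e)%:R - #|E|%:R * k%:R * c%:R ^+ 2.
Proof.
move=> dp sm un.
pose g (a : 'I_k) (v : V) : R := k%:R * (f v == a)%:R - 1.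
have S : \sum_a lam * (\sum_(e in E) \sum_(v in e) g a v ^+ 2) <=
         \sum_a \sum_(e in E) (\sum_(v in e) g a v) ^+ 2.
  by apply: ler_sum => a _; exact: rayleigh.
have eL : \sum_a lam * (\sum_(e in E) \sum_(v in e) g a v ^+ 2) =
          lam * (#|E|%:R * c%:R * (k%:R ^+ 2 - k%:R)).
  rewrite -mulr_sumr exchange_big /=; congr (_ * _).
  rewrite (eq_bigr (fun _ => c%:R * (k%:R ^+ 2 - k%:R))) => [|e eE].
    by rewrite sumr_const -[_ *+ #|E|]mulr_natl mulrA.
  rewrite exchange_big /= (eq_bigr (fun _ => k%:R ^+ 2 - k%:R)) => [|v _].
    by rewrite sumr_const un // mulr_natl.
  rewrite /g; under eq_bigr do rewrite expr2.
  by rewrite pointwise eqxx mulr1.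
have eR : \sum_a \sum_(e in E) (\sum_(v in e) g a v) ^+ 2 =
    k%:R ^+ 2 * (\sum_(e in E) Tcnt f e)%:R - #|E|%:R * k%:R * c%:R ^+ 2.
  have -> : #|E|%:R * k%:R * c%:R ^+ 2 = \sum_(e in E) (k%:R * c%:R ^+ 2) :> R.
    by rewrite sumr_const -mulrA mulr_natl.
  rewrite exchange_big /= natr_sum mulr_sumr -sumrB; apply: eq_bigr => e eE.
  rewrite (eq_bigr (fun a => \sum_(v in e) \sum_(w in e) g a v * g a w)) => [|a _]; last first.
    by rewrite expr2 mulr_suml; apply: eq_bigr => v _; rewrite mulr_sumr.
  rewrite exchange_big /=.
  have -> : k%:R * c%:R ^+ 2 = \sum_(v in e) (k%:R * c%:R) :> R.
    by rewrite sumr_const un // expr2 mulrA mulr_natr.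
  rewrite /Tcnt natr_sum mulr_sumr -sumrB; apply: eq_bigr => v ve.
  rewrite exchange_big /=.
  have -> : k%:R * c%:R = \sum_(w in e) k%:R :> R.
    by rewrite sumr_const un // mulr_natr.
  rewrite card_sumT mulr_sumr -sumrB; apply: eq_bigr => w we.
  by rewrite /g pointwise.
rewrite -eL -eR; exact: S.
Qed.

Lemma sum_eq (A : {set V}) u (F : V -> R) :
  \sum_(v in A) (v == u)%:R * F v = (u \in A)%:R * F u.
Proof.
case uA: (u \in A).
  rewrite (bigD1 u) //= eqxx big1 ?addr0 // => v /andP [_ /negbTE ->].
  by rewrite mul0r.
rewrite big1 ?mul0r // => v vA; case: eqP => [vu|]; last by rewrite mul0r.
by move: vA; rewrite vu uA.
Qed.

Lemma sum_eq1 (A : {set V}) u :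
  \sum_(v in A) (v == u)%:R = (u \in A)%:R :> R.
Proof.
rewrite -[RHS]mulr1 -(sum_eq A u (fun=> 1)); apply: eq_bigr => v _; by rewrite mulr1.
Qed.

Lemma lam_lt1 (lam : R) c :
  (forall v, 0 < hdeg E v)%N -> smallest_eigenvalue E lam -> uniform E c ->
  (2 <= c)%N -> E != set0 -> lam < 1.
Proof.
move=> dp sm un c2 /set0Pn [e0 e0E].
have : (1 < #|e0|)%N by rewrite un.
case/card_gt1P => u [w [ue0 we0 uw]].
pose g (v : V) : R := (v == u)%:R - (v == w)%:R.
have H := @rayleigh R V E dp lam sm g.
have g2 : forall v, g v ^+ 2 = (v == u)%:R + (v == w)%:R.
  move=> v; rewrite /g; case: (eqVneq v u) => [->|vu].
    by rewrite (negbTE uw) subr0 expr1n addr0.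
  by case: (eqVneq v w) => [_|vw]; rewrite /= ?sub0r ?sqrrN ?expr1n ?subr0 ?add0r ?expr0n.
have gs : forall e : {set V}, \sum_(v in e) g v = (u \in e)%:R - (w \in e)%:R.
  by move=> e; rewrite /g sumrB !sum_eq1.
have gn : forall e : {set V}, \sum_(v in e) g v ^+ 2 = (u \in e)%:R + (w \in e)%:R.
  by move=> e; under eq_bigr do rewrite g2; rewrite big_split /= !sum_eq1.
rewrite (eq_bigr _ (fun e _ => gn e)) (eq_bigr _ (fun e _ => congr1 (fun x => x ^+ 2) (gs e))) in H.
set N := \sum_(e in E) _ in H; set Q := \sum_(e in E) _ in H.
have Qge : 0 <= Q by apply: sumr_ge0 => e _; exact: sqr_ge0.
have NQ : 0 < N - Q.
  rewrite /N /Q -sumrB (bigD1 e0) //= ue0 we0 subrr expr0n /= subr0.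
  apply: (@lt_le_trans _ _ (1 + 1)); first by rewrite addr_gt0 ?ltr01.
  rewrite ler_wpDr //; apply: sumr_ge0 => e _.
  by case: (u \in e); case: (w \in e); rewrite /= ?(subrr, subr0, sub0r, sqrrN, expr1n, expr0n, addr0, add0r) /= ?subr0 ?oppr0 ?lexx ?addr_ge0 ?ler01.
have Npos : 0 < N by apply: (lt_le_trans NQ); rewrite lerBlDr lerDl.
have : lam * N < 1 * N by rewrite mul1r; apply: (le_lt_trans H); rewrite -subr_gt0.
by rewrite ltr_pM2r.
Qed.

End Main.
Arguments Tcnt {V k} f e.

Section Chi.
Variables (V : finType) (E : {set {set V}}) (d : nat).
Hypothesis d1 : (1 <= d)%N.

Lemma colorable_max : colorable E d #|V|.
Proof.
apply/existsP; exists [ffun v => enum_rank v].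
apply/forallP => e; apply/implyP => _; apply/forallP => i.
apply: (leq_trans _ d1); rewrite -(cards1 (enum_val i)); apply: subset_leq_card.
apply/subsetP => v; rewrite !inE ffunE => /andP [_ /eqP <-].
by rewrite enum_rankK.
Qed.

Lemma chi_props :
  [/\ colorable E d (chi E d), (forall k, (k < chi E d)%N -> ~~ colorable E d k)
    & (chi E d <= #|V|)%N].
Proof.
have hs : has (colorable E d) (iota 0 #|V|.+1).
  by apply/hasP; exists #|V|; [rewrite mem_iota add0n ltnSn | exact: colorable_max].
have lt : (chi E d < #|V|.+1)%N.
  by rewrite /chi -[X in (_ < X)%N](size_iota 0 #|V|.+1) -has_find.
split => //.
- by have := nth_find 0 hs; rewrite nth_iota.
- move=> k kl; have := before_find 0 kl; rewrite nth_iota ?add0n => [->//|].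
  exact: ltn_trans kl lt.
Qed.

End Chi.

Section Div.
Variables (V : finType) (E : {set {set V}}).

Lemma T_le c d k (f : {ffun V -> 'I_k}) e :
  uniform E c -> d_proper E d f -> e \in E -> (Tcnt f e <= c * d)%N.
Proof.
move=> un dp eE; rewrite -(un e eE) -sum_nat_const /Tcnt; apply: leq_sum => v _.
by move/forallP: dp => /(_ e); rewrite eE /= => /forallP /(_ (f v)).
Qed.

Lemma card_classes k (f : {ffun V -> 'I_k}) (e : {set V}) :
  #|e| = (\sum_a #|[set w in e | f w == a]|)%N.
Proof.
rewrite -sum1_card (partition_big f predT) //=; apply: eq_bigr => a _.
rewrite -sum1_card; apply: eq_bigl => w; by rewrite inE.
Qed.

Lemma dvd_from_T d k (f : {ffun V -> 'I_k}) (e : {set V}) :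
  (0 < d)%N ->
  (forall v, v \in e -> #|[set w in e | f w == f v]| <= d)%N ->
  Tcnt f e = (#|e| * d)%N -> (d %| #|e|)%N.
Proof.
move=> d0 le T.
have eqd : forall v, v \in e -> #|[set w in e | f w == f v]| = d.
  move=> v ve; apply/eqP; rewrite eqn_leq le //=; rewrite leqNgt; apply/negP => lt.
  have : (Tcnt f e < #|e| * d)%N.
    rewrite /Tcnt -sum_nat_const (bigD1 v) //= [X in (_ < X)%N](bigD1 v) //=.
    by rewrite -addSn leq_add // leq_sum // => w /andP [we _]; apply: le.
  by rewrite T ltnn.
rewrite (card_classes _ f); apply: dvdn_sum => a _.
case: (set_0Vmem [set w in e | f w == a]) => [->|[w]]; first by rewrite cards0 dvdn0.
rewrite inE => /andP [we /eqP fw]; by rewrite -fw eqd.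
Qed.

End Div.

Lemma core (R : realType) (c d : nat) (V : finType) (E : {set {set V}}) (lam : R) :
  (2 <= c)%N -> (1 <= d)%N ->
  uniform E c -> E != set0 -> (forall v, 0 < hdeg E v)%N ->
  smallest_eigenvalue E lam ->
  (c%:R - lam) / (d%:R - lam) <= (chi E d)%:R /\
  ((chi E d)%:R = (c%:R - lam) / (d%:R - lam) -> (d %| c)%N).
Proof.
move=> c2 d1 un En dp sm.
have l1 := @lam_lt1 R V E lam c dp sm un c2 En.
have Dl : 0 < d%:R - lam.
  by rewrite subr_gt0 (lt_le_trans l1) // ler1n.
have [col _ _] := @chi_props V E d d1.
set k := chi E d in col *.
case/existsP: col => f fp.
have /set0Pn [e0 e0E] := En.
have [v0 v0e] : exists v, v \in e0.
  apply/set0Pn; rewrite -card_gt0 un //; exact: leq_trans c2.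
have k0 : (0 < k)%N by apply: leq_ltn_trans (leq0n _) (ltn_ord (f v0)).
have m0 : (0 < #|E|)%N by rewrite card_gt0.
have H := @main_ineq R V E lam c k f dp sm un.
set Ts := (\sum_(e in E) Tcnt f e)%N in H.
have Tle : (Ts <= #|E| * (c * d))%N.
  rewrite -sum_nat_const; apply: leq_sum => e eE; exact: (@T_le V E c d k f e un fp eE).
have TleR : (k%:R ^+ 2 * Ts%:R <= k%:R ^+ 2 * (#|E|%:R * c%:R * d%:R) :> R).
  by rewrite ler_wpM2l ?sqr_ge0 // -!natrM ler_nat -mulnA.
have Mp : (0 : R) < #|E|%:R by rewrite ltr0n.
have Cp : (0 : R) < c%:R by rewrite ltr0n (leq_trans _ c2).
have Kp : (0 : R) < k%:R by rewrite ltr0n.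
have key : 0 <= #|E|%:R * c%:R * k%:R * (k%:R * (d%:R - lam) - (c%:R - lam)) :> R by nra.
have X0 : 0 <= k%:R * (d%:R - lam) - (c%:R - lam).
  by rewrite -(pmulr_rge0 _ (mulr_gt0 (mulr_gt0 Mp Cp) Kp)).
split.
  by rewrite ler_pdivrMr // -subr_ge0.
move=> eq.
have X : k%:R * (d%:R - lam) = c%:R - lam.
  by rewrite eq mulfVK // gt_eqF.
have TgeR : (k%:R ^+ 2 * (#|E|%:R * c%:R * d%:R) <= k%:R ^+ 2 * Ts%:R :> R) by nra.
have Tge : (#|E| * (c * d) <= Ts)%N.
  by move: TgeR; rewrite ler_pM2l ?exprn_gt0 // -!natrM ler_nat mulnA.
have Te0 : (c * d <= Tcnt f e0)%N.
  move: Tge; rewrite /Ts -sum_nat_const (bigD1 e0) //= [X in (_ <= X)%N](bigD1 e0) //=.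
  move=> h; rewrite -(leq_add2r (\sum_(i in E | i != e0) Tcnt f i)).
  apply: (leq_trans _ h); rewrite leq_add2l; apply: leq_sum => e /andP [eE _].
  exact: (@T_le V E c d k f e un fp eE).
have Teq : Tcnt f e0 = (#|e0| * d)%N.
  by apply/eqP; rewrite eqn_leq (un e0 e0E) (@T_le V E c d k f e0 un fp e0E) Te0.
rewrite -(un e0 e0E); apply: (@dvd_from_T V d k f e0 d1 _ Teq) => v ve.
by move/forallP: fp => /(_ e0); rewrite e0E /= => /forallP /(_ (f v)).
Qed.

Lemma J_eig (R : realType) n (i0 i1 : 'I_n) : i0 != i1 ->
  eigenvalue (const_mx 1 : 'M[R]_n) 0 /\
  (forall mu, eigenvalue (const_mx 1 : 'M[R]_n) mu -> 0 <= mu).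
Proof.
move=> ne; split.
  apply/eigenvalueP; exists (\row_i ((i == i0)%:R - (i == i1)%:R)).
    rewrite scale0r; apply/rowP => j; rewrite !mxE.
    under eq_bigr do rewrite !mxE mulr1.
    rewrite sumrB.
    have s1 : forall a : 'I_n, \sum_i (i == a)%:R = 1 :> R.
      by move=> a; rewrite -[RHS](@sum_ind1 R n a); apply: eq_bigr => i _; rewrite eq_sym.
    by rewrite !s1 subrr.
  apply/eqP => /rowP /(_ i0); rewrite !mxE eqxx (negbTE ne) subr0 => /eqP.
  by rewrite oner_eq0.
move=> mu /eigenvalueP [y yE ynz].
rewrite leNgt; apply/negP => mneg.
have ent : forall j, \sum_i y 0 i = mu * y 0 j.
  move=> j; have := congr1 (fun M : 'rV[R]_n => M 0 j) yE; rewrite !mxE => <-.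
  by apply: eq_bigr => i _; rewrite mxE mulr1.
set s := \sum_i y 0 i in ent.
have ss : s *+ n = mu * s.
  transitivity (\sum_(j < n) s); first by rewrite sumr_const card_ord.
  rewrite /s mulr_sumr.
  by apply: eq_bigr => j _; rewrite -ent.
have s0 : s = 0.
  apply/eqP; move: ss; rewrite -mulr_natl => /eqP; rewrite -subr_eq0 -mulrBl mulf_eq0.
  case/orP => [|//]; rewrite subr_eq0 => /eqP h.
  have : (0 : R) <= n%:R by [].
  by rewrite h leNgt mneg.
apply/negP: ynz; rewrite negbK; apply/eqP/rowP => j; rewrite mxE.
have := ent j; rewrite s0 => /esym /eqP; rewrite mulf_eq0 (negbTE (ltr0_neq0 mneg)) /=.
by move/eqP.
Qed.

Lemma chi_eq (V : finType) (E : {set {set V}}) d j : (1 <= d)%N ->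
  colorable E d j -> (forall j', (j' < j)%N -> ~~ colorable E d j') -> chi E d = j.
Proof.
move=> d1 cj nc; have [cc ncc _] := @chi_props V E d d1.
apply/eqP; rewrite eqn_leq; apply/andP; split.
  by rewrite leqNgt; apply/negP => /ncc; rewrite cj.
by rewrite leqNgt; apply/negP => /nc; rewrite cc.
Qed.

Section Example.
Variables (R : realType) (c d : nat).
Hypotheses (c2 : (2 <= c)%N) (d1 : (1 <= d)%N) (dc : (d %| c)%N).

Let E : {set {set 'I_c}} := [set [set: 'I_c]].

Let inE1 (P : pred {set 'I_c}) : P setT -> #|[set e in E | P e]| = 1%N.
Proof.
move=> Pt; rewrite (_ : [set e in E | P e] = [set setT]) ?cards1 //.
apply/setP => e; rewrite !inE; case: eqP => [->|//]; by rewrite Pt.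
Qed.

Lemma ex_uniform : uniform E c.
Proof. by move=> e; rewrite inE => /eqP ->; rewrite cardsT card_ord. Qed.

Lemma ex_nonempty : E != set0.
Proof. by apply/set0Pn; exists setT; rewrite inE. Qed.

Lemma ex_hdeg v : hdeg E v = 1%N.
Proof. by rewrite /hdeg inE1 // inE. Qed.

Lemma ex_lap : hlaplacian E R = const_mx 1.
Proof.
rewrite /hlaplacian.
have -> : hdegmx E R = 1%:M.
  by apply/matrixP => i j; rewrite !mxE ex_hdeg.
rewrite invmx1 mul1mx; apply/matrixP => i j; rewrite !mxE.
case: eqP => _; first by rewrite subr0.
by rewrite inE1 ?inE // sub0r opprK.
Qed.

Lemma ex_small : smallest_eigenvalue E (0 : R).
Proof.
have c0 : (0 < c)%N by apply: leq_trans c2.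
have c1 : (1 < c)%N by [].
have ne : enum_rank (Ordinal c0) != enum_rank (Ordinal c1).
  by apply/negP => /eqP /enum_rank_inj.
have [h1 h2] := @J_eig R _ _ _ ne.
by rewrite /smallest_eigenvalue ex_lap.
Qed.

Lemma ex_chi : chi E d = (c %/ d)%N.
Proof.
have d0 : (0 < d)%N by [].
apply: chi_eq => //.
  have lt : forall v : 'I_c, (v %/ d < c %/ d)%N.
    by move=> v; rewrite ltn_divLR // divnK // ltn_ord.
  apply/existsP; exists [ffun v => Ordinal (lt v)].
  apply/forallP => e; apply/implyP => _; apply/forallP => i.
  pose h (v : 'I_c) : 'I_d := Ordinal (ltn_pmod v d0).
  rewrite -(card_in_imset (f := h)); first by rewrite -[X in (_ <= X)%N](card_ord d) max_card.
  move=> u w; rewrite !inE !ffunE => /andP [_ /eqP fu] /andP [_ /eqP fw] huw.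
  apply/val_inj; rewrite /= (divn_eq u d) (divn_eq w d).
  have := congr1 val fu; have := congr1 val fw; move=> /= -> ->.
  by have := congr1 val huw => /= ->.
move=> j lt; apply/negP => /existsP [f fp].
have := @card_classes 'I_c j f setT.
rewrite cardsT card_ord => h.
have : (c <= j * d)%N.
  rewrite {1}h; apply: (@leq_trans (\sum_(a < j) d)).
    apply: leq_sum => a _.
    by move/forallP: fp => /(_ setT); rewrite /E inE eqxx /= => /forallP /(_ a).
  by rewrite sum_nat_const card_ord.
move: lt; rewrite leq_divRL // mulSn => lt.
move=> cjd; have := leq_trans lt cjd; rewrite -{2}[(j * d)%N]add0n leq_add2r leqn0 => /eqP d00.
by move: d0; rewrite d00.
Qed.
End Example.

Theorem mainTheorem6 (R : realType) (c d : nat) :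
  (2 <= c)%N -> (1 <= d <= c - 1)%N ->
  (* the lower bound *)
  (forall (V : finType) (E : {set {set V}}) (lam : R),
      uniform E c -> E != set0 -> (forall v, 0 < hdeg E v)%N ->
      smallest_eigenvalue E lam ->
      (c%:R - lam) / (d%:R - lam) <= (chi E d)%:R)
  /\
  (* equality forces d | c *)
  ((exists (V : finType) (E : {set {set V}}) (lam : R),
      [/\ uniform E c, E != set0, (forall v, 0 < hdeg E v)%N,
          smallest_eigenvalue E lam &
          (chi E d)%:R = (c%:R - lam) / (d%:R - lam)]) ->
   (d %| c)%N)
  /\
  (* if d | c, equality is attained *)
  ((d %| c)%N ->
   exists (V : finType) (E : {set {set V}}) (lam : R),
      [/\ uniform E c, E != set0, (forall v, 0 < hdeg E v)%N,
          smallest_eigenvalue E lam &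
          (chi E d)%:R = (c%:R - lam) / (d%:R - lam)]).
Proof.
move=> c2 /andP [d1 _]; split; [|split].
- by move=> V E lam un En dp sm; case: (@core R c d V E lam c2 d1 un En dp sm).
- move=> [V [E [lam [un En dp sm eq]]]].
  by case: (@core R c d V E lam c2 d1 un En dp sm) => _; apply.
- move=> dc; exists 'I_c, [set [set: 'I_c]], 0; split.
  + exact: ex_uniform.
  + exact: ex_nonempty.
  + by move=> v; rewrite ex_hdeg.
  + exact: ex_small.
  + by rewrite ex_chi // !subr0 natf_div.
Qed.
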